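(* Let $K$ be a compact space such that every separable continuous image of $K$ is metrizable, and such that every continuous image of $K$ has a dense metrizable subspace. Then every ccc continuous image of $K$ is metrizable. In particular, every $\aleph_0$-monolithic fragmentable compact space has all its ccc continuous images metrizable.
   Context: A space is ccc if it has no uncountable family of pairwise disjoint nonempty open sets. A space is $\aleph_0$-monolithic if each of its separable subspaces is metrizable. A compact space $K$ is fragmentable if there is a metric $d$ on $K$ such that every nonempty subset $A\subseteq K$ has, for every $\varepsilon>0$, a nonempty relatively open subset of $d$-diameter less than $\varepsilon$. *)

(* Defs.v *)
From HB Require Import structures.
From mathcomp Require Import all_boot all_order all_algebra.
From mathcomp Require Import all_classical all_reals topology.
From mathcomp Require Import Rstruct.
Set Implicit Arguments. Unset Strict Implicit. Unset Printing Implicit Defensive.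
Import Order.TTheory GRing.Theory Num.Theory.
Local Open Scope classical_set_scope.
Local Open Scope ring_scope.
Notation R := Rdefinitions.R.

Definition is_metric_on (T : Type) (A : set T) (d : T -> T -> R) : Prop :=
  (forall x y, A x -> A y -> 0 <= d x y) /\
  (forall x y, A x -> A y -> (d x y = 0 <-> x = y)) /\
  (forall x y, A x -> A y -> d x y = d y x) /\
  (forall x y z, A x -> A y -> A z -> d x z <= d x y + d y z).

(* The subspace A of T is metrizable: some metric on A generates the
   relative topology of A (relatively open sets = traces of open sets). *)
Definition metrizable_on (T : topologicalType) (A : set T) : Prop :=
  exists d : T -> T -> R, is_metric_on A d /\
    forall U : set T, U `<=` A ->
      ((exists V : set T, open V /\ U = V `&` A) <->
       (forall x, U x -> exists2 e : R, 0 < e &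
            forall y, A y -> d x y < e -> U y)).

Definition metrizable (T : topologicalType) : Prop := metrizable_on [set: T].

Definition separable_on (T : topologicalType) (A : set T) : Prop :=
  exists D : set T, D `<=` A /\ countable D /\ A `<=` closure D.

Definition separable (T : topologicalType) : Prop :=
  exists D : set T, countable D /\ dense D.

Definition ccc (T : topologicalType) : Prop :=
  forall F : set (set T),
    (forall U, F U -> open U /\ U !=set0) ->
    (forall U V, F U -> F V -> U <> V -> U `&` V = set0) ->
    countable F.

Definition aleph0_monolithic (T : topologicalType) : Prop :=
  forall A : set T, separable_on A -> metrizable_on A.

(* Compact space (Hausdorff convention of the paper). *)
Definition compact_space (T : topologicalType) : Prop :=
  hausdorff_space T /\ compact [set: T].

(* L is a continuous image of K (images are Hausdorff spaces, as all spaces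
   in the paper are). *)
Definition continuous_image (K L : topologicalType) : Prop :=
  hausdorff_space L /\
  exists f : K -> L, continuous f /\ (forall y, exists x, f x = y).

(* Fragmentable: some metric d on K (not necessarily related to the topology)
   such that every nonempty subset has, for every e > 0, a nonempty relatively
   open subset of d-diameter less than e. *)
Definition fragmentable (K : topologicalType) : Prop :=
  exists d : K -> K -> R, is_metric_on [set: K] d /\
    forall (A : set K), A !=set0 -> forall e : R, 0 < e ->
      exists W : set K, open W /\ (W `&` A) !=set0 /\
        exists2 r : R, r < e &
          forall x y, (W `&` A) x -> (W `&` A) y -> d x y <= r.

(* Main.v *)
Require Import Defs.
From HB Require Import structures.
From mathcomp Require Import all_boot all_order all_algebra.
From mathcomp Require Import all_classical all_reals topology.
From mathcomp Require Import Rstruct normedtype.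
From mathcomp Require Import interval_inference Rstruct_topology.
From mathcomp Require Import lra.
Set Implicit Arguments. Unset Strict Implicit. Unset Printing Implicit Defensive.
Import Order.TTheory GRing.Theory Num.Theory.
Local Open Scope classical_set_scope.
Local Open Scope ring_scope.
Definition pt_of (T : topologicalType) (t0 : T) : Type := T.
HB.instance Definition _ (T : topologicalType) (t0 : T) := Topological.copy (pt_of t0) T.
HB.instance Definition _ (T : topologicalType) (t0 : T) := isPointed.Build (pt_of t0) t0.
Lemma cc (T : topologicalType) (t0 : T) (A : set T) : compact A -> @cover_compact (pt_of t0) A.
Proof. move=> c; rewrite -compact_cover. exact: c. Qed.
Lemma seq_min (T : Type) (F : set (set T)) (s : seq (set T)) :
  total_on F subset -> (forall X, X \in s -> F X) -> s != [::] ->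
  exists2 Xm, Xm \in s & forall X, X \in s -> Xm `<=` X.
Proof.
move=> tot; elim: s => [//|a s IH] Fs _.
have Fa : F a by apply: Fs; rewrite inE eqxx.
have [->|sn] := eqVneq s [::].
  by exists a; rewrite ?inE ?eqxx // => X; rewrite inE => /eqP ->.
have [|Xm Xms XmP] := IH _ sn.
  by move=> X Xs; apply: Fs; rewrite inE Xs orbT.
have FXm : F Xm by apply: Fs; rewrite inE Xms orbT.
have [aXm|Xma] := tot _ _ Fa FXm.
  exists a; first by rewrite inE eqxx.
  move=> X; rewrite inE => /orP[/eqP ->//|/XmP]; exact: subset_trans.
exists Xm; first by rewrite inE Xms orbT.
by move=> X; rewrite inE => /orP[/eqP ->//|/XmP].
Qed.

Lemma chain_cpt (T : topologicalType) (F : set (set T)) (t0 : T) :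
  compact [set: T] -> (forall X, F X -> closed X /\ X !=set0) ->
  total_on F subset -> (\bigcap_(X in F) X) !=set0.
Proof.
move=> cpt FP tot; apply: contrapT => /set0P/negP; rewrite negbK => /eqP I0.
move: (@cc T t0 _ cpt) => /(_ (set T) F setC).
case.
- by move=> X /FP [cX _]; exact: closed_openC.
- move=> x _; apply: contrapT => ncov.
  have : (\bigcap_(X in F) X) x.
    move=> X FX; apply: contrapT => nX; apply: ncov; by exists X.
  by rewrite I0.
move=> D' D'F cov.
have [X0 X0D' _] := cov t0 I.
have H1 : forall X, X \in finmap.enum_fset D' -> F X.
  by move=> X XD; apply/set_mem/D'F.
have H2 : finmap.enum_fset D' != [::].
  have X0e : X0 \in finmap.enum_fset D' by exact: X0D'.
  by apply/eqP => e; rewrite e in X0e.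
have [Xm XmD' XmP] := @seq_min T F (finmap.enum_fset D') tot H1 H2.
have [x Xmx] := (FP Xm (set_mem (D'F _ XmD'))).2.
have [X XD nXx] := cov x I.
by apply: nXx; apply: (XmP X) => //.
Qed.

Lemma decr_le (T : Type) (C : nat -> set T) : (forall n, C n.+1 `<=` C n) ->
  forall m n, (m <= n)%N -> C n `<=` C m.
Proof.
move=> dec m n /subnK <-; elim: (n - m)%N => [|k IH]; first by rewrite add0n.
by rewrite addSn; apply: subset_trans (dec _) IH.
Qed.

Lemma decr_cpt (T : topologicalType) (C : nat -> set T) (N : set T) :
  compact [set: T] -> (forall n, closed (C n)) -> (forall n, C n.+1 `<=` C n) ->
  open N -> \bigcap_n C n `<=` N -> exists n, C n `<=` N.
Proof.
move=> cpt cC dec oN sub; apply: contrapT => nex.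
have ne n : (C n `&` ~` N) !=set0.
  apply: contrapT => /set0P/negP; rewrite negbK => /eqP e.
  apply: nex; exists n => x Cx; apply: contrapT => nNx.
  by have : (C n `&` ~` N) x by []; rewrite e.
have [t0 _] := ne 0%N.
have H1 : forall X, range (fun n => C n `&` ~` N) X -> closed X /\ X !=set0.
  move=> _ [n _ <-]; split; last exact: ne.
  by apply: closedI => //; exact: open_closedC.
have H2 : total_on (range (fun n => C n `&` ~` N)) subset.
  move=> _ _ [m _ <-] [n _ <-]; have [mn|nm] := leqP m n.
    by right => x [Cx Nx]; split => //; exact: (decr_le dec mn).
  by left => x [Cx Nx]; split => //; exact: (decr_le dec (ltnW nm)).
have [x Ix] := @chain_cpt T _ t0 cpt H1 H2.
have : N x.
  by apply: sub => n _; have [] := Ix (C n `&` ~` N) (ex_intro2 _ _ n I erefl).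
by have [] := Ix (C 0%N `&` ~` N) (ex_intro2 _ _ 0%N I erefl).
Qed.

Lemma decr_ne (T : topologicalType) (C : nat -> set T) :
  compact [set: T] -> (forall n, closed (C n)) -> (forall n, C n.+1 `<=` C n) ->
  (forall n, C n !=set0) -> (\bigcap_n C n) !=set0.
Proof.
move=> cpt cC dec ne; apply: contrapT => /set0P/negP; rewrite negbK => /eqP e.
have [|n Cn] := @decr_cpt T C set0 cpt cC dec open0; first by rewrite e.
by have [x /Cn] := ne n.
Qed.

Lemma maxfam (T : topologicalType) (P : set T -> Prop) :
  (forall U, open U -> U !=set0 -> exists V, [/\ V `<=` U, open V, V !=set0 & P V]) ->
  exists F : set (set T), (forall V, F V -> [/\ open V, V !=set0 & P V]) /\
    (forall V W, F V -> F W -> V <> W -> V `&` W = set0) /\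
    (forall U, open U -> U !=set0 -> exists2 V, F V & (U `&` V) !=set0).
Proof.
move=> hd.
pose good (F : set (set T)) := (forall V, F V -> [/\ open V, V !=set0 & P V]) /\
   (forall V W, F V -> F W -> V <> W -> V `&` W = set0).
have [A [[gA dA] maxA]] : exists A, good A /\ forall B, A `<` B -> ~ good B.
  apply: Zorn_bigcup => G Ggood tot; split.
  - by move=> V [X GX XV]; exact: (Ggood X GX).1 V XV.
  - move=> V W [X GX XV] [Y GY YW] VW.
    have [XY|YX] := tot _ _ GX GY.
    + exact: (Ggood Y GY).2 V W (XY _ XV) YW VW.
    + exact: (Ggood X GX).2 V W XV (YX _ YW) VW.
exists A; split=> //; split=> //.
move=> U oU U0; apply: contrapT => nex.
have dis V : A V -> U `&` V = set0.
  move=> AV; apply/seteqP; split => // x [Ux Vx]; apply: nex; exists V => //.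
  by exists x.
have [V0 [V0U oV0 V0ne PV0]] := hd U oU U0.
have V0A : ~ A V0.
  move=> AV0; have := dis _ AV0; have [x V0x] := V0ne.
  move/seteqP => [+ _] => /(_ x) H; by case: (H (conj (V0U _ V0x) V0x)).
apply: (maxA (A `|` [set V0])).
- split; first by move=> X AX; left.
  by move=> /(_ V0 (or_intror erefl)).
- split.
  + by move=> V [/gA //|->].
  + move=> V W [AV|->] [AW|->] VW //.
    * exact: dA.
    * by apply/seteqP; split => // x [Vx Wx]; have := dis _ AV; move/seteqP => [+ _] => /(_ x (conj (V0U _ Wx) Vx)).
    * by apply/seteqP; split => // x [Vx Wx]; have := dis _ AW; move/seteqP => [+ _] => /(_ x (conj (V0U _ Vx) Wx)).
Qed.

Definition mchar (T : topologicalType) (A : set T) (d : T -> T -> R) :=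
  forall U : set T, U `<=` A ->
      ((exists V : set T, open V /\ U = V `&` A) <->
       (forall x, U x -> exists2 e : R, 0 < e &
            forall y, A y -> d x y < e -> U y)).

Lemma mball_open (T : topologicalType) (A : set T) (d : T -> T -> R) :
  is_metric_on A d -> mchar A d -> forall z r, A z ->
  exists V, open V /\ [set x | A x /\ d z x < r] = V `&` A.
Proof.
move=> [d0 [dE [dC dT]]] Hc z r Az.
apply/(Hc _ (fun x => @proj1 _ _)) => x [Ax dzx].
exists (r - d z x); first by rewrite subr_gt0.
move=> y Ay dxy; split => //.
have := dT z x y Az Ax Ay; move: dxy; rewrite ltrBrDl => h1 h2.
exact: le_lt_trans h2 h1.
Qed.

Lemma mopen_ball (T : topologicalType) (A : set T) (d : T -> T -> R) :
  mchar A d -> forall V x, open V -> V x -> A x ->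
  exists2 e : R, 0 < e & forall y, A y -> d x y < e -> V y.
Proof.
move=> Hc V x oV Vx Ax.
have H := (Hc (V `&` A) (fun _ => @proj2 _ _)).1 (ex_intro _ V (conj oV erefl)).
have [e e0 H'] := H x (conj Vx Ax); exists e => // y Ay dxy.
by have [] := H' y Ay dxy.
Qed.

Lemma arch_inv (e : R) : 0 < e -> exists n : nat, n.+1%:R^-1 < e.
Proof.
move=> e0; have := near_infty_natSinv_lt (PosNum e0).
move=> [N _ HN].
by exists N; apply: HN => /=.
Qed.

Lemma empty_sep (L : topologicalType) : ~ (exists y : L, True) -> separable L.
Proof.
move=> ne; exists set0; split; first exact: countable0.
by move=> O [y _]; case: ne; exists y.
Qed.

Lemma pick_fun (L : Type) (y0 : L) (D : set L) :
  exists pt : set L -> L, forall V, (V `&` D) !=set0 -> (V `&` D) (pt V).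
Proof.
have /choice[pt Hpt] : forall V : set L, exists y, (V `&` D) !=set0 -> (V `&` D) y.
  move=> V; case: (pselect ((V `&` D) !=set0)) => [[y Hy]|n].
    by exists y.
  by exists y0.
by exists pt.
Qed.

Lemma ccc_dense_metr_sep (L : topologicalType) (D : set L) :
  ccc L -> dense D -> metrizable_on D -> separable L.
Proof.
move=> cc dD [d [md Hc]].
have [[y0 _]|ne] := pselect (exists y : L, True); last exact: empty_sep.
have md' := md; move: md' => [d0 [dE [dC dT]]].
pose P (n : nat) (V : set L) := forall x y, V x -> V y -> D x -> D y ->
   d x y < n.+1%:R^-1.
have hered n : forall U, open U -> U !=set0 ->
    exists V, [/\ V `<=` U, open V, V !=set0 & P n V].
  move=> U oU U0.
  have [z [Uz Dz]] := dD U U0 oU.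
  have r0 : 0 < n.+1%:R^-1 / 2 :> R by rewrite divr_gt0 // invr_gt0 ltr0n.
  have [V' [oV' eV']] := mball_open md Hc (n.+1%:R^-1 / 2) Dz.
  exists (V' `&` U); split.
  - by move=> x [].
  - exact: openI.
  - exists z; split => //.
    have : [set x | D x /\ d z x < n.+1%:R^-1 / 2] z.
      by split => //; rewrite (dE z z Dz Dz).2.
    by rewrite eV' => -[].
  - move=> x y [V'x _] [V'y _] Dx Dy.
    have : [set x | D x /\ d z x < n.+1%:R^-1 / 2] x by rewrite eV'.
    have : [set x | D x /\ d z x < n.+1%:R^-1 / 2] y by rewrite eV'.
    move=> [_ hy] [_ hx].
    apply: (le_lt_trans (dT x z y Dx Dz Dy)).
    rewrite (dC x z Dx Dz) [X in _ < X](splitr (n.+1%:R^-1)).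
    exact: ltrD.
have /choice[F HF] : forall n, exists F : set (set L),
    (forall V, F V -> [/\ open V, V !=set0 & P n V]) /\
    (forall V W, F V -> F W -> V <> W -> V `&` W = set0) /\
    (forall U, open U -> U !=set0 -> exists2 V, F V & (U `&` V) !=set0).
  by move=> n; apply: maxfam; exact: hered.
have [pt Hpt] := pick_fun y0 D.
exists (\bigcup_(n in [set: nat]) (pt @` F n)); split.
  apply: bigcup_countable; first exact: countableP.
  move=> n _; apply: sub_countable (card_image_le _ _) _.
  apply: cc.
  - by move=> V /((HF n).1) [].
  - exact: (HF n).2.1.
move=> O O0 oO.
have [z [Oz Dz]] := dD O O0 oO.
have [e e0 He] := mopen_ball Hc oO Oz Dz.
have e20 : 0 < e / 2 by rewrite divr_gt0.
have [n Hn] := arch_inv e20.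
have [V' [oV' eV']] := mball_open md Hc (e / 2) Dz.
have V'z : V' z.
  have : [set x | D x /\ d z x < e / 2] z.
    by split => //; rewrite (dE z z Dz Dz).2.
  by rewrite eV' => -[].
have [V FV [w [V'w Vw]]] := (HF n).2.2 V' oV' (ex_intro _ z V'z).
have [oV V0 PV] := (HF n).1 V FV.
have [w' [[V'w' Vw'] Dw']] := dD (V' `&` V) (ex_intro _ w (conj V'w Vw)) (openI oV' oV).
have VD : (V `&` D) !=set0 by exists w'.
have [Vp Dp] := Hpt V VD.
exists (pt V); split; last by exists n => //; exists V.
apply: He => //.
have : [set x | D x /\ d z x < e / 2] w' by rewrite eV'.
move=> [_ hw].
have hp := PV w' (pt V) Vw' Vp Dw' Dp.
apply: (le_lt_trans (dT z w' (pt V) Dz Dw' Dp)).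
rewrite [X in _ < X](splitr e); apply: ltrD => //.
exact: lt_trans hp Hn.
Qed.

Lemma irred (K L : topologicalType) (f : K -> L) :
  compact [set: K] -> hausdorff_space L -> continuous f ->
  (forall y, exists x, f x = y) ->
  exists K' : set K, [/\ closed K', (forall y, exists2 x, K' x & f x = y) &
   (forall W, open W -> (W `&` K') !=set0 ->
      exists y, forall x, K' x -> f x = y -> W x)].
Proof.
move=> cK hL cf onto.
pose P (A : set K) := open A /\ (forall y, exists2 x, ~ A x & f x = y).
have [A [[oA ontoA] maxA]] : exists A, P A /\ forall B, A `<` B -> ~ P B.
  apply: Zorn_bigcup => G GP tot; split.
    by apply: bigcup_open => X GX; exact: (GP X GX).1.
  move=> y; have [x0 fx0] := onto y.
  pose G' := G `|` [set set0].
  pose F := [set (~` X) `&` f @^-1` [set y] | X in G'].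
  have H1 : forall Z, F Z -> closed Z /\ Z !=set0.
    move=> _ [X G'X <-]; split.
      apply: closedI; first by apply: open_closedC; case: G'X => [/GP[]//|->]; exact: open0.
      apply: preimage_closed; first by move=> ? _; exact: cf.
      exact/accessible_closed_set1/hausdorff_accessible.
    case: G'X => [/GP [_ /(_ y) [x nX fx]]|->]; first by exists x.
    by exists x0; split => // [].
  have H2 : total_on F subset.
    move=> _ _ [X G'X <-] [Y G'Y <-].
    have [XY|YX] : X `<=` Y \/ Y `<=` X.
      case: G'X => [GX|->]; last by left.
      case: G'Y => [GY|->]; last by right.
      exact: tot.
    + by right => x [nY fx]; split => // Xx; apply: nY; exact: XY.
    + by left => x [nX fx]; split => // Yx; apply: nX; exact: YX.
  have [x Ix] := @chain_cpt K F x0 cK H1 H2.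
  exists x.
    move=> [X GX Xx].
    by have [] := Ix (~` X `&` f @^-1` [set y]) (ex_intro2 _ _ X (or_introl GX) erefl).
  by have [_ ->] := Ix (~` set0 `&` f @^-1` [set y]) (ex_intro2 _ _ set0 (or_intror erefl) erefl).
exists (~` A); split.
- exact: open_closedC.
- by move=> y; have [x nA fx] := ontoA y; exists x.
move=> W oW [w [Ww nAw]]; apply: contrapT => nex.
apply: (maxA (A `|` W)).
  split; first by move=> x Ax; left.
  by move=> /(_ w (or_intror Ww)).
split; first exact: openU.
move=> y; apply: contrapT => nex2; apply: nex; exists y => x nAx fx.
apply: contrapT => nWx; apply: nex2; exists x => //.
by case.
Qed.

Lemma reg_open (L : topologicalType) : hausdorff_space L -> compact [set: L] ->
  forall U (y : L), open U -> U y -> exists V, [/\ open V, V y & closure V `<=` U].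
Proof.
move=> hL cL U y oU Uy.
have [B By cBU] := @compact_regular L y setT hL cL filterT U (open_nbhs_nbhs (conj oU Uy)).
exists (interior B); split.
- exact: open_interior.
- exact: By.
- exact: subset_trans (closureS (@interior_subset _ B)) cBU.
Qed.

Lemma img_closed (K L : topologicalType) (f : K -> L) (S : set K) :
  compact [set: K] -> hausdorff_space L -> continuous f -> closed S ->
  closed (f @` S).
Proof.
move=> cK hL cf cS; apply: compact_closed => //.
apply: continuous_compact; first exact: continuous_subspaceT.
exact: subclosed_compact cS cK (@subsetT _ S).
Qed.

Lemma le0_inv (a : R) : 0 <= a -> (forall n : nat, a <= n.+1%:R^-1) -> a = 0.
Proof.
move=> a0 H; apply/eqP; rewrite eq_le a0 andbT; apply: contrapT => /negP.
rewrite -ltNge => apos; have [n Hn] := arch_inv apos.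
by move: (H n); rewrite leNgt Hn.
Qed.

Lemma sep_image (K L : topologicalType) (f : K -> L) (d : K -> K -> R) (K' : set K) :
  compact [set: K] -> compact [set: L] -> hausdorff_space L -> ccc L ->
  continuous f -> closed K' ->
  (forall y, exists2 x, K' x & f x = y) ->
  (forall W, open W -> (W `&` K') !=set0 ->
      exists y, forall x, K' x -> f x = y -> W x) ->
  (forall x y, d x y = 0 -> x = y) -> (forall x y, 0 <= d x y) ->
  (forall (A : set K), A !=set0 -> forall e : R, 0 < e ->
      exists W : set K, open W /\ (W `&` A) !=set0 /\
        exists2 r : R, r < e &
          forall x y, (W `&` A) x -> (W `&` A) y -> d x y <= r) ->
  separable L.
Proof.
move=> cK cL hL cc cf cK' onto irr dE d0 fr.
have [[y0 _]|ne] := pselect (exists y : L, True); last exact: empty_sep.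
have V0P : forall W, open W -> (W `&` K') !=set0 ->
    let V0 := [set y | forall x, K' x -> f x = y -> W x] in
    open V0 /\ V0 !=set0.
  move=> W oW WK' V0; split; last by have [y Hy] := irr W oW WK'; exists y.
  have -> : V0 = ~` (f @` (K' `&` ~` W)).
    apply/seteqP; split.
      by move=> y Hy [x [K'x nWx] fx]; apply: nWx; exact: Hy.
    move=> y Hy x K'x fx; apply: contrapT => nWx; apply: Hy; by exists x.
  apply: closed_openC; apply: img_closed => //.
  by apply: closedI => //; exact: open_closedC.
pose P (n : nat) (G : set (set L)) (V : set L) :=
  (exists2 V', G V' & closure V `<=` V') /\
  (forall x x', K' x -> K' x' -> closure V (f x) -> closure V (f x') ->
      d x x' <= n.+1%:R^-1).
pose dense_u (G : set (set L)) :=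
  forall U, open U -> U !=set0 -> exists2 V', G V' & (U `&` V') !=set0.
pose disj (G : set (set L)) :=
  forall V W, G V -> G W -> V <> W -> V `&` W = set0.
have hered n G : (forall V', G V' -> open V') -> dense_u G ->
    forall U, open U -> U !=set0 ->
    exists V, [/\ V `<=` U, open V, V !=set0 & P n G V].
  move=> oG dG U oU U0.
  have [V' GV' [y1 [Uy1 V'y1]]] := dG U oU U0.
  pose A := K' `&` f @^-1` (U `&` V').
  have A0 : A !=set0.
    by have [x K'x fx] := onto y1; exists x; split => //; rewrite /= fx.
  have e0 : 0 < n.+1%:R^-1 :> R by rewrite invr_gt0 ltr0n.
  have [W [oW [WA0 [r re Hr]]]] := fr A A0 _ e0.
  pose W'' := W `&` f @^-1` (U `&` V').
  have oW'' : open W''.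
    apply: openI => //; apply: open_comp; first by move=> ? _; exact: cf.
    exact: openI (oG _ GV').
  have W''K' : (W'' `&` K') !=set0.
    by have [x [Wx [K'x fx]]] := WA0; exists x.
  have [oV0 [y2 V0y2]] := V0P W'' oW'' W''K'.
  have [V [oV Vy2 cV]] := reg_open hL cL oV0 V0y2.
  have inUV y : [set y | forall x, K' x -> f x = y -> W'' x] y -> U y /\ V' y.
    move=> Hy; have [x K'x fx] := onto y; have [_ []] := Hy x K'x fx.
    by rewrite fx.
  exists V; split => //.
  - by move=> y Vy; exact: (inUV y (cV y (subset_closure Vy))).1.
  - by exists y2.
  split.
    by exists V' => // y cy; exact: (inUV y (cV y cy)).2.
  move=> x x' K'x K'x' cx cx'.
  have [Wx [Ux V'x]] := cV _ cx x K'x erefl.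
  have [Wx' [Ux' V'x']] := cV _ cx' x' K'x' erefl.
  apply: le_trans (ltW re); apply: Hr; split => //; split => //.
have /choice[step Hstep] : forall p : set (set L) * nat, exists F : set (set L),
    ((forall V', p.1 V' -> open V') /\ dense_u p.1) ->
    [/\ (forall V, F V -> [/\ open V, V !=set0 & P p.2 p.1 V]), disj F & dense_u F].
  move=> [G n] /=.
  case: (pselect ((forall V', G V' -> open V') /\ dense_u G)) => [[oG dG]|nh]; last first.
    by exists set0 => h; case: (nh h).
  have [F [F1 [F2 F3]]] := maxfam (hered n G oG dG).
  by exists F => _; split.
pose fam := fix fam n := match n with 0 => [set setT] | n'.+1 => step (fam n', n') end.
have famP n : [/\ (forall V, fam n V -> open V /\ V !=set0), disj (fam n) & dense_u (fam n)].
  elim: n => [|n [IH1 IH2 IH3]].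
    split.
    - by move=> V /= ->; split; [exact: openT | exists y0].
    - by move=> V W /= -> ->.
    - by move=> U oU [u Uu]; exists setT => //; exists u.
  have [S1 S2 S3] := Hstep (fam n, n) (conj (fun V h => (IH1 V h).1) IH3).
  split => //; by move=> V /S1 [].
have famS n V : fam n.+1 V -> P n (fam n) V.
  have [IH1 _ IH3] := famP n.
  have [S1 _ _] := Hstep (fam n, n) (conj (fun V h => (IH1 V h).1) IH3).
  by move=> h; have [_ _ ?] := S1 V h.
have [pt Hpt] := pick_fun y0 setT.
exists (\bigcup_(n in [set: nat]) (pt @` fam n)); split.
  apply: bigcup_countable; first exact: countableP.
  move=> n _; apply: sub_countable (card_image_le _ _) _.
  have [F1 F2 _] := famP n.
  apply: cc => //; move=> V /F1 [].
move=> O O0 oO.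
have [y Oy] := O0.
have [O' [oO' O'y cO']] := reg_open hL cL oO Oy.
have /choice[next Hnext] : forall p : set L * nat, exists V : set L,
    (fam p.2 p.1 /\ (p.1 `&` O') !=set0) ->
    fam p.2.+1 V /\ (V `&` (p.1 `&` O')) !=set0.
  move=> [V n] /=.
  case: (pselect (fam n V /\ (V `&` O') !=set0)) => [[fV VO]|nh]; last first.
    by exists setT => h; case: (nh h).
  have [F1 _ _] := famP n; have [_ _ F3] := famP n.+1.
  have [W fW WV] := F3 (V `&` O') (openI (F1 V fV).1 oO') VO.
  by exists W => _; split => //; rewrite setIC.
pose br := fix br n := match n with 0 => [set: L] | n'.+1 => next (br n', n') end.
have brP n : fam n (br n) /\ (br n `&` O') !=set0.
  elim: n => [|n [IH1 IH2]]; first by split => //; exists y.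
  have [h1 [z [bz [_ O'z]]]] := Hnext (br n, n) (conj IH1 IH2).
  by split => //; exists z.
have brI n : (br n.+1 `&` br n) !=set0.
  have [IH1 IH2] := brP n.
  by have [_ [z [bz [bz' _]]]] := Hnext (br n, n) (conj IH1 IH2); exists z.
have nest n : closure (br n.+1) `<=` br n.
  have [[V' fV' cV'] _] := famS n _ (brP n.+1).1.
  suff -> : br n = V' by [].
  apply: contrapT => neq.
  have [_ D2 _] := famP n.
  have := D2 _ _ (brP n).1 fV' neq.
  have [z [b1 b0]] := brI n.
  move/seteqP => [+ _] => /(_ z (conj b0 (cV' z (subset_closure b1)))).
  by [].
pose C n := closure (br n.+1).
have cC n : closed (C n) by exact: closed_closure.
have decC n : C n.+1 `<=` C n.
  by move=> z /nest; exact: subset_closure.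
have neC n : C n !=set0.
  by have [_ [z [bz _]]] := brP n.+1; exists z; exact: subset_closure.
have [z Iz] := decr_ne cL cC decC neC.
have uniq z' : (\bigcap_n C n) z' -> z' = z.
  move=> Iz'.
  have [x K'x fx] := onto z; have [x' K'x' fx'] := onto z'.
  suff e : x' = x by rewrite -fx -fx' e.
  apply: dE; apply: le0_inv => // n.
  have [_ Hd] := famS n _ (brP n.+1).1.
  apply: Hd => //; first by rewrite fx'; exact: Iz'.
  by rewrite fx; exact: Iz.
have small N : open N -> N z -> exists n, C n `<=` N.
  move=> oN Nz; apply: decr_cpt => //.
  by move=> z' /uniq ->.
have Oz : O z.
  apply: cO' => B Bz.
  have [n Cn] := small (interior B) (@open_interior _ B) Bz.
  have [_ [w [bw O'w]]] := brP n.+1.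
  exists w; split => //; apply: interior_subset; apply: Cn; exact: subset_closure.
have [n Cn] := small O oO Oz.
have [w [bw _]] := (brP n.+1).2.
have [Hb _] := Hpt (br n.+1) (ex_intro _ w (conj bw I)).
exists (pt (br n.+1)); split; first by apply: Cn; exact: subset_closure.
by exists n.+1 => //; exists (br n.+1) => //; exact: (brP n.+1).1.
Qed.

Lemma empty_metr (L : topologicalType) : ~ (exists y : L, True) -> metrizable L.
Proof.
move=> ne; exists (fun _ _ => 0).
have nx : forall x : L, False by move=> x; apply: ne; exists x.
split; first by split; [|split; [|split]] => x; case: (nx x).
move=> U _; split => [_ x|_]; first by case: (nx x).
exists set0; split; first exact: open0.
by apply/seteqP; split => x; case: (nx x).
Qed.

Lemma sup_ub (t : nat -> R) : (forall k, 0 <= t k <= 1) ->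
  forall k, t k <= sup (range t).
Proof.
move=> tb k; apply: sup_upper_bound; last by exists k.
split; first by exists (t 0%N), 0%N.
by exists 1 => _ [j _ <-]; have /andP[] := tb j.
Qed.

Lemma sup_lub (t : nat -> R) (b : R) : (forall k, t k <= b) -> sup (range t) <= b.
Proof.
move=> tb; apply: ge_sup; first by exists (t 0%N), 0%N.
by move=> _ [j _ <-].
Qed.

Lemma near_all_le (T : Type) (F : set_system T) (P : nat -> T -> Prop) :
  Filter F -> (forall k, \forall z \near F, P k z) ->
  forall N, \forall z \near F, forall k, (k <= N)%N -> P k z.
Proof.
move=> FF H; elim=> [|N IH].
  by apply: filterS (H 0%N) => z Pz k; rewrite leqn0 => /eqP ->.
apply: filterS2 IH (H N.+1) => z h1 h2 k; rewrite leq_eqVlt => /orP[/eqP -> //|].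
by rewrite ltnS; exact: h1.
Qed.

Lemma metr_from_funs (L : topologicalType) (g : nat -> L -> R) :
  compact [set: L] -> (forall k, continuous (g k)) ->
  (forall k y, 0 <= g k y <= 1) ->
  (forall y z, y <> z -> exists k, g k y = 0 /\ g k z = 1) -> metrizable L.
Proof.
move=> cL cg g01 sepg.
pose t y z k := `|g k y - g k z| / k.+1%:R.
have kpos k : 0 < k.+1%:R :> R by rewrite ltr0n.
have dist1 k y z : `|g k y - g k z| <= 1.
  have /andP[a0 a1] := g01 k y; have /andP[b0 b1] := g01 k z.
  rewrite ler_norml; apply/andP; split; lra.
have tle k y z : t y z k <= `|g k y - g k z|.
  by rewrite /t ler_pdivrMr // ler_peMr // ler1n.
have t01 y z k : 0 <= t y z k <= 1.
  apply/andP; split; first by rewrite /t divr_ge0 // ltW.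
  exact: le_trans (tle _ _ _) (dist1 _ _ _).
pose dL y z := sup (range (t y z)).
have ub y z k : t y z k <= dL y z by exact: sup_ub.
have lub y z b : (forall k, t y z k <= b) -> dL y z <= b by exact: sup_lub.
have d0 y z : 0 <= dL y z.
  by apply: le_trans (ub y z 0%N); have /andP[] := t01 y z 0%N.
exists dL; split.
  split; first by move=> x y _ _; exact: d0.
  split.
    move=> x y _ _; split => [dxy|->].
      apply: contrapT => nxy; have [k [gx gy]] := sepg x y nxy.
      have : t x y k <= dL x y by exact: ub.
      rewrite dxy /t gx gy sub0r normrN normr1 => h.
      have : 0 < k.+1%:R^-1 :> R by rewrite invr_gt0.
      by move: h; rewrite ?mul1r ?div1r => h; rewrite ltNge h.
    apply/eqP; rewrite eq_le d0 andbT; apply: lub => k.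
    by rewrite /t subrr normr0 mul0r.
  split.
    move=> x y _ _; apply/eqP; rewrite eq_le; apply/andP; split; apply: lub => k;
      by rewrite /t distrC; exact: ub.
  move=> x y z _ _ _; apply: lub => k.
  apply: le_trans (lerD (ub x y k) (ub y z k)).
  rewrite /t -mulrDl ler_wpM2r //.
  exact: ler_distD.
move=> U _; split.
  move=> [V [oV ->]] y [Vy _].
  pose Cs N := ~` V `&` [set z | forall k, (k <= N)%N -> `|g k y - g k z| <= N.+1%:R^-1].
  have cCs N : closed (Cs N).
    apply: closedI; first exact: open_closedC.
    have -> : [set z | forall k, (k <= N)%N -> `|g k y - g k z| <= N.+1%:R^-1] =
       \bigcap_(k in [set k | (k <= N)%N]) (g k @^-1` closed_ball (g k y) N.+1%:R^-1).
      apply/seteqP; split => z /= h k /h; rewrite /preimage /= (@closed_ballE _ R^o) ?invr_gt0 //.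
    apply: closed_bigI => k _; apply: preimage_closed; first by move=> ? _; exact: cg.
    exact: closed_ball_closed.
  have decCs N : Cs N.+1 `<=` Cs N.
    move=> z [nV h]; split => // k kN; apply: le_trans (h k (leqW kN)) _.
    by rewrite lef_pV2 ?posrE // ler_nat.
  have [N0 HN0] : exists N, Cs N `<=` set0.
    apply: (decr_cpt cL cCs decCs open0).
    move=> z Iz; have [nV _] := Iz 0%N I.
    have yz : y <> z by move=> e; apply: nV; rewrite -e.
    have [k [gy gz]] := sepg y z yz.
    have [_ h] := Iz k.+1 I; have := h k (leqW (leqnn k)).
    rewrite gy gz sub0r normrN normr1 -[X in X <= _]invr1 lef_pV2 ?posrE // lern1 ltnS ltn0 => h0; discriminate h0.
  exists (N0.+1%:R^-1 / N0.+1%:R); first by rewrite divr_gt0 ?invr_gt0.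
  move=> z _ dz; split => //; apply: contrapT => nVz.
  have : ~ Cs N0 z by move=> /HN0.
  move=> nC; have [k [kN hk]] : exists k, (k <= N0)%N /\ N0.+1%:R^-1 < `|g k y - g k z|.
    apply: contrapT => nex; apply: nC; split => // k kN.
    by rewrite leNgt; apply/negP => h; apply: nex; exists k.
  have := ub y z k; rewrite /t => h1.
  have h2 : `|g k y - g k z| / N0.+1%:R <= `|g k y - g k z| / k.+1%:R.
    by rewrite ler_wpM2l // lef_pV2 ?posrE // ler_nat.
  have h3 : N0.+1%:R^-1 / N0.+1%:R < `|g k y - g k z| / N0.+1%:R.
    by rewrite ltr_pM2r // invr_gt0.
  have := lt_le_trans h3 (le_trans h2 h1); rewrite ltNge => /negP; apply.
  exact: ltW.
move=> H; exists U; split; last by rewrite setIT.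
rewrite openE => y Uy; have [e e0 He] := H y Uy.
have e20 : 0 < e / 2 by rewrite divr_gt0.
have [N HN] := arch_inv e20.
have near1 k : \forall z \near y, `|g k y - g k z| < e / 2.
  exact: (@cvgr_dist_lt _ R^o _ (nbhs y) _ (g k) (g k y) (cg k y) _ e20).
have hn : \forall z \near y, forall k, (k <= N)%N -> `|g k y - g k z| < e / 2.
  exact: near_all_le.
apply: (@filterS _ (nbhs y) _ _ _ _ hn) => z hz; apply: He => //.
apply: le_lt_trans (_ : e / 2 < e); last by rewrite ltr_pdivrMr // ltr_pMr // ltr1n.
apply: lub => k; have [kN|Nk] := leqP k N.
  exact: le_trans (tle _ _ _) (ltW (hz k kN)).
apply: le_trans (ltW HN); apply: le_trans (ler_wpM2r _ (dist1 k y z)) _.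
  by rewrite invr_ge0 ltW.
by rewrite mul1r lef_pV2 ?posrE // ler_nat ltnW.
Qed.

Lemma metr_image (K L : topologicalType) (f : K -> L) :
  compact [set: K] -> hausdorff_space L -> continuous f ->
  (forall y, exists x, f x = y) -> aleph0_monolithic K -> separable L ->
  metrizable L.
Proof.
move=> cK hL cf onto mono [D [cD dD]].
have [[y0 _]|ne] := pselect (exists y : L, True); last exact: empty_metr.
have cL : compact [set: L].
  have -> : [set: L] = f @` [set: K].
    apply/seteqP; split => // y _; have [x fx] := onto y; by exists x.
  apply: continuous_compact => //; exact: continuous_subspaceT.
have /countable_injP[gi gi_inj] := cD.
have /choice[e He] : forall n : nat, exists y : L,
    (exists2 y', D y' & gi y' = n) -> D y /\ gi y = n.
  move=> n; case: (pselect (exists2 y', D y' & gi y' = n)) => [[y' Dy' gy']|nh].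
    by exists y'.
  by exists y0 => h; case: (nh h).
have De : D `<=` range e.
  move=> y Dy; exists (gi y) => //.
  have [De1 De2] := He (gi y) (ex_intro2 _ _ y Dy erefl).
  by apply: gi_inj => //; rewrite inE.
have /choice[c Hc] : forall n, exists x, f x = e n by move=> n; exact: onto.
pose M := closure (range c).
have cM : closed M by exact: closed_closure.
have cM_in n : M (c n) by apply: subset_closure; exists n.
have [rho [mrho Hrho]] : metrizable_on M.
  apply: mono; exists (range c); split; first exact: subset_closure.
  split => //; apply: sub_countable (card_image_le _ _) _; exact: countableP.
have mrho' := mrho; move: mrho' => [r0 [rE [rC rT]]].
have fM : forall y, exists2 x, M x & f x = y.
  have cfM : closed (f @` M) by exact: img_closed.
  have sub : D `<=` f @` M.
    by move=> y' /De [n _ <-]; exists (c n) => //; exact: Hc.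
  move=> y.
  have : closure D y.
    move=> B By; have := dD (interior B) (ex_intro _ y By) (@open_interior _ B).
    by case=> w [iw Dw]; exists w; split => //; exact: interior_subset.
  move=> /(closureS sub); rewrite -((closure_id _).1 cfM) => -[x Mx fx].
  by exists x.
pose Aset (n m : nat) := f @` (M `&` [set x | rho (c n) x <= m.+1%:R^-1]).
have cA n m : closed (Aset n m).
  apply: img_closed => //.
  have [V [oV eV]] : exists V, open V /\
      [set x | M x /\ m.+1%:R^-1 < rho (c n) x] = V `&` M.
    apply/(Hrho _ (fun x => @proj1 _ _)) => x [Mx hx].
    exists (rho (c n) x - m.+1%:R^-1); first by rewrite subr_gt0.
    move=> y My hy; split => //.
    have := rT (c n) y x (cM_in n) My Mx.
    rewrite (rC y x My Mx) => h.
    set a := m.+1%:R^-1 in hx hy *; lra.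
  have -> : M `&` [set x | rho (c n) x <= m.+1%:R^-1] = M `&` ~` V.
    apply/seteqP; split => x [Mx hx]; split => //.
      move=> Vx; have : (V `&` M) x by [].
      by rewrite -eV => -[_]; rewrite ltNge hx.
    rewrite /= leNgt; apply/negP => h; apply: hx.
    have : [set x | M x /\ m.+1%:R^-1 < rho (c n) x] x by [].
    by rewrite eV => -[].
  apply: closedI => //; exact: open_closedC.
have small : forall y N, open N -> N y ->
    exists n m, Aset n m y /\ Aset n m `<=` N.
  move=> y N oN Ny; have [x Mx fx] := fM y.
  have fNx : (f @^-1` N) x by rewrite /preimage /= fx.
  have [eps eps0 Heps] := mopen_ball Hrho (open_comp (fun _ _ => cf _) oN) fNx Mx.
  have eps20 : 0 < eps / 2 by rewrite divr_gt0.
  have [m Hm] := arch_inv eps20.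
  have [V [oV eV]] := mball_open mrho Hrho (m.+1%:R^-1) Mx.
  have Vx : V x.
    have : [set z | M z /\ rho x z < m.+1%:R^-1] x.
      by split => //; rewrite (rE x x Mx Mx).2 // invr_gt0 ltr0n.
    by rewrite eV => -[].
  have [_ [[n _ <-] Vcn]] := Mx V (open_nbhs_nbhs (conj oV Vx)).
  have hn : rho x (c n) < m.+1%:R^-1.
    have : (V `&` M) (c n) by split => //; exact: cM_in.
    by rewrite -eV => -[].
  exists n, m; split.
    exists x => //; split => //; rewrite /= rC //; try exact: ltW; exact: cM_in.
  move=> _ [x' [Mx' hx'] <-]; apply: Heps => //.
  apply: (le_lt_trans (rT x (c n) x' Mx (cM_in n) Mx')).
  rewrite [X in _ < X](splitr eps).
  have h1 : rho (c n) x' < eps / 2 by exact: le_lt_trans hx' Hm.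
  have h2 : rho x (c n) < eps / 2 by exact: lt_trans hn Hm.
  exact: ltrD.
pose q (k : nat) : (nat * nat) * (nat * nat) := odflt ((0, 0), (0, 0))%N (unpickle k).
have /choice[g Hg] : forall k : nat, exists h : L -> R,
    [/\ continuous h, (forall y, 0 <= h y <= 1) &
     (Aset (q k).1.1 (q k).1.2 `&` Aset (q k).2.1 (q k).2.2 = set0 ->
      (forall y, Aset (q k).1.1 (q k).1.2 y -> h y = 0) /\
      (forall y, Aset (q k).2.1 (q k).2.2 y -> h y = 1))].
  move=> k; set A := Aset _ _; set B := Aset _ _.
  case: (pselect (A `&` B = set0)) => [AB|nAB]; last first.
    exists (fun _ => 0); split => //; first exact: cst_continuous.
    by move=> y; rewrite lexx ler01.
  have us : uniform_separator A B.
    exact: (@normal_separatorP R L).1 (compact_normal hL cL) A B (cA _ _) (cA _ _) AB.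
  have [h [ch rh h0 h1]] := (@uniform_separatorP L R A B).1 us.
  exists h; split => //.
    move=> y; have := rh (h y) (ex_intro2 _ _ y I erefl).
    by rewrite /= in_itv.
  move=> _; split => y Ay.
    exact: h0 (ex_intro2 _ _ y Ay erefl).
  exact: h1 (ex_intro2 _ _ y Ay erefl).
apply: (@metr_from_funs L g cL).
- by move=> k; have [] := Hg k.
- by move=> k y; have [_ h _] := Hg k; exact: h.
move=> y z yz.
have := hL; rewrite open_hausdorff => /(_ y z) [].
  by apply/eqP.
move=> [N N'] /= [yN zN'] [oN oN' NN'].
have [n [m [Ay AN]]] := small y N oN (set_mem yN).
have [n' [m' [Bz BN']]] := small z N' oN' (set_mem zN').
pose k := pickle ((n, m), (n', m')).
have qk : q k = ((n, m), (n', m')) by rewrite /q /k pickleK.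
have [_ _ Hk] := Hg k; rewrite qk /= in Hk.
have AB : Aset n m `&` Aset n' m' = set0.
  apply/seteqP; split => // w [Aw Bw].
  move/eqP: NN' => /seteqP [+ _] => /(_ w (conj (AN _ Aw) (BN' _ Bw))).
  by [].
have [h0 h1] := Hk AB.
by exists k; split; [exact: h0|exact: h1].
Qed.

Lemma part2 (K : topologicalType) : compact_space K ->
     aleph0_monolithic K -> fragmentable K ->
     forall L : topologicalType, continuous_image K L -> ccc L -> metrizable L.
Proof.
move=> [hK cK] mono [d [md fr]] L [hL [f [cf onto]]] cc.
have cL : compact [set: L].
  have -> : [set: L] = f @` [set: K].
    apply/seteqP; split => // y _; have [x fx] := onto y; by exists x.
  apply: continuous_compact => //; exact: continuous_subspaceT.
have [K' [cK' ontoK' irr]] := irred cK hL cf onto.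
have md' := md; move: md' => [d0 [dE _]].
apply: (metr_image cK hL cf onto mono).
apply: (sep_image cK cL hL cc cf cK' ontoK' irr).
- by move=> x y dxy; exact: (dE x y I I).1 dxy.
- by move=> x y; exact: d0 x y I I.
- exact: fr.
Qed.
Theorem proposition3p11 :
  (forall K : topologicalType, compact_space K ->
     (forall L : topologicalType, continuous_image K L ->
        separable L -> metrizable L) ->
     (forall L : topologicalType, continuous_image K L ->
        exists D : set L, dense D /\ metrizable_on D) ->
     forall L : topologicalType, continuous_image K L -> ccc L -> metrizable L)
  /\
  (forall K : topologicalType, compact_space K ->
     aleph0_monolithic K -> fragmentable K ->
     forall L : topologicalType, continuous_image K L -> ccc L -> metrizable L).
Proof.
split; last exact: part2.
move=> K _ H1 H2 L imL cL; apply: H1 => //.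
have [D [dD mD]] := H2 L imL.
exact: ccc_dense_metr_sep cL dD mD.
Qed.
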